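(* Let $\Gamma_2$ be a finite alphabet and $n\in\mathbb N$. There is a pushdown automaton with $3n+2$ states and stack alphabet consisting of two symbols, in whose runs the stack height never exceeds $n$, whose language is exactly $(\Gamma_2)^{2^n}$ (the set of words over $\Gamma_2$ of length $2^n$).
   Context: A pushdown automaton has transitions labelled by a letter or $\epsilon$ and a stack operation (push a symbol, pop a symbol, or no operation); it accepts a word if there is a run from the initial state with empty stack reading the word and ending in a final state with empty stack. *)

(* Defs.v *)
From mathcomp Require Import all_boot.
Set Implicit Arguments. Unset Strict Implicit. Unset Printing Implicit Defensive.

Inductive stack_op (S : Type) : Type :=
| Push of S
| Pop of S
| Nop.

(* A pushdown automaton over input alphabet A, with state set Q and stack
   alphabet S.  A transition (q, l, op, q') is labelled by a letter
   (Some a) or epsilon (None) and a stack operation. *)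
Record pda (A Q S : finType) := Pda {
  trans : Q -> option A -> stack_op S -> Q -> bool;
  init : Q;
  final : pred Q
}.

Section Runs.
Variables (A Q S : finType) (P : pda A Q S).

(* A configuration: current state and stack (top of stack = head). *)
Definition config := (Q * seq S)%type.

Definition apply_op (op : stack_op S) (st st' : seq S) : Prop :=
  match op with
  | Push s => st' = s :: st
  | Pop s => st = s :: st'
  | Nop => st' = st
  end.

Definition step (c : config) (l : option A) (c' : config) : Prop :=
  exists op, trans P c.1 l op c'.1 /\ apply_op op c.2 c'.2.

Definition label_word (l : option A) : seq A :=
  if l is Some a then [:: a] else [::].

Inductive reaches : config -> seq A -> config -> Prop :=
| reaches_refl c : reaches c [::] c
| reaches_step c l c' w c'' :
    step c l c' -> reaches c' w c'' -> reaches c (label_word l ++ w) c''.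

Definition init_config : config := (init P, [::]).

Definition accepts (w : seq A) : Prop :=
  exists f, final P f /\ reaches init_config w (f, [::]).

Definition stack_bounded (h : nat) : Prop :=
  forall w c, reaches init_config w c -> size c.2 <= h.

End Runs.

(* Main.v *)
Require Import Defs.
From mathcomp Require Import all_boot.
From mathcomp Require Import zify.

Set Implicit Arguments. Unset Strict Implicit. Unset Printing Implicit Defensive.

Section Construction.
Variables (G : finType) (n : nat).

Definition St := 'I_(3 * n + 2).

Definition tr (q : St) (l : option G) (op : stack_op 'I_2) (q' : St) : bool :=
  match l, op with
  | Some _, Nop => (nat_of_ord q == 0) && (nat_of_ord q' == n + 1)
  | None, Push s =>
      if nat_of_ord s == 0 then (0 < nat_of_ord q) && (nat_of_ord q <= n) && (nat_of_ord q' == nat_of_ord q - 1)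
      else (2 * n + 2 <= nat_of_ord q) && (nat_of_ord q' == nat_of_ord q - (2 * n + 2))
  | None, Pop s =>
      (n + 1 <= nat_of_ord q) && (nat_of_ord q < 2 * n + 1) &&
      (nat_of_ord q' == if nat_of_ord s == 0 then nat_of_ord q + n + 1 else nat_of_ord q + 1)
  | _, _ => false
  end.

Lemma pos3 : 0 < 3 * n + 2. Proof. by rewrite addn2. Qed.

Definition mkS (i : nat) : St := Ordinal (ltn_pmod i pos3).

Lemma val_mkS i : i < 3 * n + 2 -> nat_of_ord (mkS i) = i.
Proof. by move=> H; rewrite /= modn_small. Qed.

Definition thePda : pda G St 'I_2 := Pda tr (mkS n) (fun q => nat_of_ord q == 2 * n + 1).

Definition bval (st : seq 'I_2) : nat := foldr (fun b acc => nat_of_ord b + 2 * acc) 0 st.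

Definition Inv (c : config St 'I_2) (p : nat) : Prop :=
  let i := nat_of_ord c.1 in let st := c.2 in
  (exists k, [/\ i = k, k <= n, size st = n - k & p = bval st * 2 ^ k]) \/
  (exists k, [/\ i = n + 1 + k, k <= n, size st = n - k & p = (bval st + 1) * 2 ^ k]) \/
  (exists k, [/\ i = 2 * n + 2 + k, k < n, size st = n - k - 1 & p = (2 * bval st + 1) * 2 ^ k]).

Lemma step_inv c l c' p : step thePda c l c' -> Inv c p -> Inv c' (p + size (label_word l)).
Proof.
case: c c' => [q st] [q' st'] [op [/= Ht Hop]].
have ltq := ltn_ord q; have ltq' := ltn_ord q'.
rewrite /Inv /=.
move: Ht; rewrite /tr => Ht.
case: l Ht => [a|]; case: op Hop => [s|s|] /= Hop Ht //.
- move/andP: Ht => [/eqP Hq /eqP Hq']; subst st'.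
  case=> [[k [Hi Hk Hs Hp]]|[[k [Hi Hk Hs Hp]]|[k [Hi Hk Hs Hp]]]]; try lia.
  right; left; exists 0; split => //; try lia.
  have k0 : k = 0 by lia.
  have E : 2 ^ k = 1 by rewrite k0.
  rewrite E expn0 in Hp *; lia.
- have Hs2 := ltn_ord s.
  case: ifP Ht => Hs0.
  + move=> /andP [/andP [H1 H2] /eqP Hq']; subst st'.
    case=> [[k [Hi Hk Hs Hp]]|[[k [Hi Hk Hs Hp]]|[k [Hi Hk Hs Hp]]]]; try lia.
    left; exists (k.-1); split; try lia.
    * by rewrite /= Hs; lia.
    * case: k Hi Hk Hs Hp => [|k] Hi Hk Hs Hp; first lia.
      rewrite /= expnS in Hp *; move/eqP: Hs0 => ->; lia.
  + move=> /andP [H1 /eqP Hq']; subst st'.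
    case=> [[k [Hi Hk Hs Hp]]|[[k [Hi Hk Hs Hp]]|[k [Hi Hk Hs Hp]]]]; try lia.
    left; exists k; split; try lia.
    * by rewrite /= Hs; lia.
    * rewrite /=; have -> : nat_of_ord s = 1 by move/negbT/eqP: Hs0; lia.
      lia.
- have Hs2 := ltn_ord s.
  move: Ht => /andP [/andP [H1 H2] /eqP Hq']; subst st.
  case=> [[k [Hi Hk Hs Hp]]|[[k [Hi Hk Hs Hp]]|[k [Hi Hk Hs Hp]]]]; try lia.
  move: Hs Hp; rewrite /= => Hs Hp.
  case: ifP Hq' => Hs0 Hq'.
  + right; right; exists k; split; try lia.
  + right; left; exists k.+1; split; try lia.
    have E : nat_of_ord s = 1 by move/negbT/eqP: Hs0; lia.
    rewrite E in Hp; rewrite expnS; lia.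
Qed.

Lemma reaches_inv c w c' p : reaches thePda c w c' -> Inv c p -> Inv c' (p + size w).
Proof.
move=> R; elim: R p => [c0|c0 l c1 w0 c2 S _ IH] p H; first by rewrite addn0.
rewrite size_cat addnA; apply: IH; exact: step_inv S H.
Qed.

Lemma Inv_init : Inv (init_config thePda) 0.
Proof.
left; exists n; rewrite /= modn_small; last lia.
split => //; lia.
Qed.

Lemma reaches_cat c u c' v c'' :
  reaches thePda c u c' -> reaches thePda c' v c'' -> reaches thePda c (u ++ v) c''.
Proof.
elim=> [//|c0 l c1 w c2 S _ IH] R; rewrite -catA; apply: reaches_step S _; exact: IH.
Qed.

Lemma reaches1 c l c' : step thePda c l c' -> reaches thePda c (label_word l) c'.
Proof. move=> S; rewrite -[label_word l]cats0; apply: reaches_step S _; exact: reaches_refl. Qed.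

Lemma block k st w : k <= n -> size w = 2 ^ k ->
  reaches thePda (mkS k, st) w (mkS (n + 1 + k), st).
Proof.
elim: k st w => [|k IH] st w Hk Hw.
- case: w Hw => [|a [|]] // _.
  apply: (reaches1 (l := Some a)); exists (Nop _); split => //=.
  rewrite /= ?modn_small; lia.
- have Hw1 : size (take (2 ^ k) w) = 2 ^ k by rewrite size_takel // Hw expnS; lia.
  have Hw2 : size (drop (2 ^ k) w) = 2 ^ k by rewrite size_drop Hw expnS; lia.
  rewrite -(cat_take_drop (2 ^ k) w).
  have z0 : (0 < 2)%N by [].
  have o1 : (1 < 2)%N by [].
  apply: (reaches_cat (u := [::]) (c' := (mkS k, Ordinal z0 :: st))).
    apply: (reaches1 (l := None)); exists (Push (Ordinal z0)); split => //=.
    rewrite /= ?modn_small; lia.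
  apply: reaches_cat; first exact: (IH _ _ (ltnW Hk) Hw1).
  apply: (reaches_cat (u := [::]) (c' := (mkS (2 * n + 2 + k), st))).
    apply: (reaches1 (l := None)); exists (Pop (Ordinal z0)); split => //=.
    rewrite /= ?modn_small; lia.
  apply: (reaches_cat (u := [::]) (c' := (mkS k, Ordinal o1 :: st))).
    apply: (reaches1 (l := None)); exists (Push (Ordinal o1)); split => //=.
    rewrite /= ?modn_small; lia.
  rewrite -[drop _ _]cats0.
  apply: reaches_cat; first exact: (IH _ _ (ltnW Hk) Hw2).
  apply: (reaches1 (l := None)); exists (Pop (Ordinal o1)); split => //=.
  rewrite /= ?modn_small; lia.
Qed.

End Construction.

Theorem claim4p5 (Gamma2 : finType) (n : nat) :
  exists P : pda Gamma2 'I_(3 * n + 2) 'I_2,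
    stack_bounded P n /\
    (forall w : seq Gamma2, accepts P w <-> size w = 2 ^ n).
Proof.
exists (thePda Gamma2 n); split.
  move=> w c R; have := reaches_inv R (Inv_init Gamma2 n).
  by case=> [[k [_ _ -> _]]|[[k [_ _ -> _]]|[k [_ _ -> _]]]]; lia.
move=> w; split.
  case=> f [Hf R]; have := reaches_inv R (Inv_init Gamma2 n).
  move/eqP: Hf; rewrite /= => Hf.
  case=> [[k [Hi Hk Hs Hp]]|[[k [Hi Hk Hs Hp]]|[k [Hi Hk Hs Hp]]]];
    rewrite /= in Hi Hs Hp; try lia.
  have E : k = n by lia.
  by rewrite E mul1n in Hp; rewrite -Hp.
move=> Hw; exists (mkS n (2 * n + 1)); split.
  by rewrite /= modn_small //; lia.
have := block [::] (leqnn n) Hw.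
by have -> : (2 * n + 1 = n + 1 + n)%N by lia.
Qed.
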